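(* Let $p,q$ be distinct propositional letters and let $M_{pq}=(W,V_{pq})$ be the model with $W=\{w_1,w_2,w_3\}$ in which $p$ is true exactly at $w_1,w_2$, $q$ is true exactly at $w_2,w_3$, and every other letter is true at no world. Let $\varphi(a,b)$ be a context (of propositional dependence logic $\mathcal D$) in which $p,q$ do not occur, and let $\varphi(=\!(p),=\!(q))$ be obtained by replacing $a$ with $=\!(p)$ and $b$ with $=\!(q)$. Then $\varphi(=\!(p),=\!(q))$ is equivalent in $M_{pq}$ to one of: $\top$; $(=\!(p)\land=\!(q))\otimes(=\!(p)\land=\!(q))$; $=\!(p)$; $=\!(q)$; $=\!(p)\land=\!(q)$; $\bot$.
   Context: Formulas of $\mathcal D$: $\varphi::= p\mid\neg p\mid\bot\mid=\!(p_1,\dots,p_n;q)\mid\varphi\land\varphi\mid\varphi\otimes\varphi$ with $p,q,p_i$ propositional letters ($n\ge0$; for $n=0$ the atom is written $=\!(q)$). A context $\varphi(a,b)$ is a $\mathcal D$ formula in which the letters $a,b$ do not occur negated nor inside a dependence atom. A model is $M=(W,V)$, $V(w)$ the set of letters true at $w$. Support at $s\subseteq W$: $s\models p$ iff $p$ true at all $w\in s$; $s\models\neg p$ iff $p$ false at all $w\in s$; $s\models\bot$ iff $s=\emptyset$; $s\models\psi\land\chi$ iff both; $s\models\psi\otimes\chi$ iff $s=t_1\cup t_2$ with $t_1\models\psi$, $t_2\models\chi$; $s\models=\!(p_1,\dots,p_n;q)$ iff any two worlds of $s$ agreeing on all $p_i$ agree on $q$ (so $s\models=\!(q)$ iff $q$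 has the same value throughout $s$). $\top$ denotes a formula supported by every state (in $\mathcal D$, $p\otimes\neg p$). Equivalence in $M$ means being supported by the same states of $M$. *)

(* Defs.v *)
From Stdlib Require Import List Bool Arith.
Import ListNotations.

Definition letter := nat.

Inductive form : Type :=
| Atom (p : letter)
| NegAtom (p : letter)
| Bot
| Dep (ps : list letter) (q : letter)   (* =(p1,...,pn; q); n = 0 gives =(q) *)
| And (f g : form)
| Tensor (f g : form).

(* A model over a world type W: V w r = true iff letter r is true at w. *)
Definition state (W : Type) := W -> bool.

Fixpoint supports {W : Type} (V : W -> letter -> bool) (s : state W) (f : form) : Prop :=
  match f with
  | Atom p => forall w, s w = true -> V w p = true
  | NegAtom p => forall w, s w = true -> V w p = false
  | Bot => forall w, s w = false
  | Dep ps q => forall w v, s w = true -> s v = true ->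
                 (forall r, In r ps -> V w r = V v r) -> V w q = V v q
  | And f g => supports V s f /\ supports V s g
  | Tensor f g => exists t1 t2 : state W,
                   (forall w, s w = orb (t1 w) (t2 w)) /\
                   supports V t1 f /\ supports V t2 g
  end.

Definition equiv_in {W : Type} (V : W -> letter -> bool) (f g : form) : Prop :=
  forall s : state W, supports V s f <-> supports V s g.

Definition dep0 (q : letter) : form := Dep [] q.

(* Top := p (+) ~p, with p := 0 (any letter works). *)
Definition Top : form := Tensor (Atom 0) (NegAtom 0).

Fixpoint occurs (r : letter) (f : form) : Prop :=
  match f with
  | Atom p | NegAtom p => r = p
  | Bot => False
  | Dep ps q => In r ps \/ r = q
  | And f g | Tensor f g => occurs r f \/ occurs r g
  end.

Fixpoint occurs_bad (r : letter) (f : form) : Prop :=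
  match f with
  | Atom _ => False
  | NegAtom p => r = p
  | Bot => False
  | Dep ps q => In r ps \/ r = q
  | And f g | Tensor f g => occurs_bad r f \/ occurs_bad r g
  end.

(* phi(a,b) is a context: a, b occur neither negated nor inside dependence atoms. *)
Definition is_context (a b : letter) (phi : form) : Prop :=
  ~ occurs_bad a phi /\ ~ occurs_bad b phi.

Fixpoint subst2 (a b : letter) (fa fb : form) (phi : form) : form :=
  match phi with
  | Atom r => if Nat.eqb r a then fa else if Nat.eqb r b then fb else Atom r
  | NegAtom r => NegAtom r
  | Bot => Bot
  | Dep ps q => Dep ps q
  | And f g => And (subst2 a b fa fb f) (subst2 a b fa fb g)
  | Tensor f g => Tensor (subst2 a b fa fb f) (subst2 a b fa fb g)
  end.

Inductive world3 : Type := w1 | w2 | w3.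

Definition V_pq (p q : letter) (w : world3) (r : letter) : bool :=
  (Nat.eqb r p && match w with w1 | w2 => true | w3 => false end)
  || (Nat.eqb r q && match w with w1 => false | w2 | w3 => true end).

(* Main.v *)
Require Import Defs.
From Stdlib Require Import List Bool Arith Setoid.
Import ListNotations.

Inductive cls := cBot | cC1 | cA | cB | cC2 | cT.

Definition semb (c : cls) (x1 x2 x3 : bool) : bool :=
  match c with
  | cBot => negb (x1 || x2 || x3)
  | cC1 => negb ((x1 && x2) || (x1 && x3) || (x2 && x3))
  | cA => negb ((x1 || x2) && x3)
  | cB => negb (x1 && (x2 || x3))
  | cC2 => negb (x1 && x2 && x3)
  | cT => true
  end.

Definition andc (c d : cls) : cls :=
  match c, d with
  | cBot, _ | _, cBot => cBot
  | cT, x | x, cT => x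
  | cC1, _ | _, cC1 => cC1
  | cA, cB | cB, cA => cC1
  | cA, _ | _, cA => cA
  | cB, _ | _, cB => cB
  | cC2, cC2 => cC2
  end.

Definition tensc (c d : cls) : cls :=
  match c, d with
  | cBot, x | x, cBot => x
  | cC1, cC1 => cC2
  | _, _ => cT
  end.

Definition bs := [true; false].
Definition cs := [cBot; cC1; cA; cB; cC2; cT].

Lemma fab (P : bool -> bool) : forallb P bs = true -> forall b, P b = true.
Proof.
  simpl. intros H b. destruct (P true) eqn:E1, (P false) eqn:E2; simpl in H; try discriminate; destruct b; auto.
Qed.

Lemma fac (P : cls -> bool) : forallb P cs = true -> forall c, P c = true.
Proof.
  simpl. intros H c. repeat (apply andb_true_iff in H; destruct H as [? H]).
  destruct c; auto.
Qed.

Definition chk_and :=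
  forallb (fun c => forallb (fun d => forallb (fun x1 => forallb (fun x2 => forallb (fun x3 =>
    Bool.eqb (semb (andc c d) x1 x2 x3) (semb c x1 x2 x3 && semb d x1 x2 x3)) bs) bs) bs) cs) cs.

Lemma andc_ok c d x1 x2 x3 :
  semb (andc c d) x1 x2 x3 = semb c x1 x2 x3 && semb d x1 x2 x3.
Proof.
  assert (H : chk_and = true) by reflexivity.
  apply Bool.eqb_prop.
  revert x3; apply fab; revert x2; apply fab; revert x1; apply fab;
  revert d; apply fac; revert c; apply fac; exact H.
Qed.

Definition chk_fwd :=
  forallb (fun c => forallb (fun d => forallb (fun y1 => forallb (fun y2 => forallb (fun y3 =>
  forallb (fun z1 => forallb (fun z2 => forallb (fun z3 =>
    implb (semb c y1 y2 y3 && semb d z1 z2 z3)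
      (semb (tensc c d) (y1 || z1) (y2 || z2) (y3 || z3))) bs) bs) bs) bs) bs) bs) cs) cs.

Lemma tensc_fwd c d y1 y2 y3 z1 z2 z3 :
  semb c y1 y2 y3 = true -> semb d z1 z2 z3 = true ->
  semb (tensc c d) (y1 || z1) (y2 || z2) (y3 || z3) = true.
Proof.
  assert (H : chk_fwd = true) by reflexivity.
  intros H1 H2.
  assert (K : forall c d y1 y2 y3 z1 z2 z3, implb (semb c y1 y2 y3 && semb d z1 z2 z3)
      (semb (tensc c d) (y1 || z1) (y2 || z2) (y3 || z3)) = true).
  { intros c' d' y1' y2' y3' z1' z2' z3'.
    revert z3'; apply fab; revert z2'; apply fab; revert z1'; apply fab;
    revert y3'; apply fab; revert y2'; apply fab; revert y1'; apply fab;
    revert d'; apply fac; revert c'; apply fac; exact H. }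
  specialize (K c d y1 y2 y3 z1 z2 z3).
  rewrite H1, H2 in K. exact K.
Qed.
Definition trip := (bool * bool * bool)%type.
Definition trips : list trip :=
  flat_map (fun a => flat_map (fun b => map (fun c => (a, b, c)) bs) bs) bs.
Definition sembt c (t : trip) := let '(a, b, e) := t in semb c a b e.
Definition okw c d (x y z : trip) :=
  let '(x1, x2, x3) := x in let '(y1, y2, y3) := y in let '(z1, z2, z3) := z in
  Bool.eqb x1 (y1 || z1) && Bool.eqb x2 (y2 || z2) && Bool.eqb x3 (y3 || z3)
  && semb c y1 y2 y3 && semb d z1 z2 z3.
Definition chk_bwd :=
  forallb (fun c => forallb (fun d => forallb (fun x =>
    implb (sembt (tensc c d) x)
      (existsb (fun y => existsb (fun z => okw c d x y z) trips) trips)) trips) cs) cs.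

Lemma trips_all x1 x2 x3 : In (x1, x2, x3) trips.
Proof. destruct x1, x2, x3; simpl; tauto. Qed.

Lemma tensc_bwd c d x1 x2 x3 :
  semb (tensc c d) x1 x2 x3 = true ->
  exists y1 y2 y3 z1 z2 z3 : bool,
    x1 = y1 || z1 /\ x2 = y2 || z2 /\ x3 = y3 || z3 /\
    semb c y1 y2 y3 = true /\ semb d z1 z2 z3 = true.
Proof.
  intro Hs.
  assert (H : chk_bwd = true) by reflexivity.
  unfold chk_bwd in H.
  rewrite forallb_forall in H. specialize (H c ltac:(destruct c; simpl; tauto)).
  rewrite forallb_forall in H. specialize (H d ltac:(destruct d; simpl; tauto)).
  rewrite forallb_forall in H. specialize (H (x1, x2, x3) (trips_all x1 x2 x3)).
  unfold sembt in H. rewrite Hs in H. cbn [implb] in H.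
  apply existsb_exists in H. destruct H as [[[y1 y2] y3] [_ H]].
  apply existsb_exists in H. destruct H as [[[z1 z2] z3] [_ H]].
  unfold okw in H. repeat rewrite andb_true_iff in H.
  destruct H as [[[[e1 e2] e3] h1] h2].
  apply Bool.eqb_prop in e1, e2, e3.
  exists y1, y2, y3, z1, z2, z3. tauto.
Qed.

Section M.
Variables p q : letter.
Hypothesis Hpq : p <> q.
Local Notation V := (V_pq p q).

Definition hascls (f : form) (c : cls) : Prop :=
  forall s : state world3, supports V s f <-> semb c (s w1) (s w2) (s w3) = true.

Lemma Vp w : V w p = match w with w3 => false | _ => true end.
Proof.
  unfold V_pq. rewrite Nat.eqb_refl.
  assert (E : Nat.eqb p q = false) by (apply Nat.eqb_neq; auto).
  rewrite E. destruct w; reflexivity.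
Qed.

Lemma Vq w : V w q = match w with w1 => false | _ => true end.
Proof.
  unfold V_pq. rewrite Nat.eqb_refl.
  assert (E : Nat.eqb q p = false) by (apply Nat.eqb_neq; auto).
  rewrite E. destruct w; reflexivity.
Qed.

Lemma Vr r w : r <> p -> r <> q -> V w r = false.
Proof.
  intros H1 H2. unfold V_pq.
  apply Nat.eqb_neq in H1. apply Nat.eqb_neq in H2.
  rewrite H1, H2. reflexivity.
Qed.

Lemma dep_p : hascls (dep0 p) cA.
Proof.
  intro s. simpl. split.
  - intro H.
    destruct (s w1) eqn:E1, (s w2) eqn:E2, (s w3) eqn:E3; simpl; try reflexivity;
    exfalso;
    first [ pose proof (H w1 w3 E1 E3 (fun r Hr => match Hr with end)) as K
          | pose proof (H w2 w3 E2 E3 (fun r Hr => match Hr with end)) as K ];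
    rewrite !Vp in K; discriminate.
  - intros Hs w v Hw Hv _. rewrite !Vp.
    destruct (s w1) eqn:E1, (s w2) eqn:E2, (s w3) eqn:E3; simpl in Hs; try discriminate;
    destruct w, v; congruence.
Qed.

Lemma dep_q : hascls (dep0 q) cB.
Proof.
  intro s. simpl. split.
  - intro H.
    destruct (s w1) eqn:E1, (s w2) eqn:E2, (s w3) eqn:E3; simpl; try reflexivity;
    exfalso;
    first [ pose proof (H w1 w2 E1 E2 (fun r Hr => match Hr with end)) as K
          | pose proof (H w1 w3 E1 E3 (fun r Hr => match Hr with end)) as K ];
    rewrite !Vq in K; discriminate.
  - intros Hs w v Hw Hv _. rewrite !Vq.
    destruct (s w1) eqn:E1, (s w2) eqn:E2, (s w3) eqn:E3; simpl in Hs; try discriminate;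
    destruct w, v; congruence.
Qed.

Lemma and_ok f g c d : hascls f c -> hascls g d -> hascls (And f g) (andc c d).
Proof.
  intros Hf Hg s. simpl. rewrite (Hf s), (Hg s), andc_ok, andb_true_iff. tauto.
Qed.

Lemma tens_ok f g c d : hascls f c -> hascls g d -> hascls (Tensor f g) (tensc c d).
Proof.
  intros Hf Hg s. simpl. split.
  - intros [t1 [t2 [Hs [H1 H2]]]].
    apply Hf in H1. apply Hg in H2. rewrite !Hs. apply tensc_fwd; auto.
  - intro H. apply tensc_bwd in H.
    destruct H as [y1 [y2 [y3 [z1 [z2 [z3 [e1 [e2 [e3 [H1 H2]]]]]]]]]].
    exists (fun w => match w with w1 => y1 | w2 => y2 | w3 => y3 end).
    exists (fun w => match w with w1 => z1 | w2 => z2 | w3 => z3 end).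
    split; [intro w; destruct w; assumption|].
    split; [apply Hf | apply Hg]; assumption.
Qed.

Lemma top_all s : supports V s Top.
Proof.
  simpl.
  exists (fun w => s w && V w 0). exists (fun w => s w && negb (V w 0)).
  split; [| split].
  - intro w. destruct (s w), (V w 0); reflexivity.
  - intros w H. apply andb_true_iff in H. tauto.
  - intros w H. apply andb_true_iff in H. destruct H as [_ H].
    destruct (V w 0); simpl in H; congruence.
Qed.

Lemma main (a b : letter) (phi : form) :
  a <> b ->
  ~ occurs_bad a phi -> ~ occurs_bad b phi ->
  ~ occurs p phi -> ~ occurs q phi ->
  exists c, hascls (subst2 a b (dep0 p) (dep0 q) phi) c.
Proof.
  intros Hab. induction phi; simpl; intros Ha Hb Hp Hq.
  - destruct (Nat.eqb p0 a) eqn:E1; [exists cA; apply dep_p|].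
    destruct (Nat.eqb p0 b) eqn:E2; [exists cB; apply dep_q|].
    exists cBot. intro s. simpl. split.
    + intro H.
      destruct (s w1) eqn:E1', (s w2) eqn:E2', (s w3) eqn:E3'; simpl; try reflexivity;
      exfalso;
      first [ pose proof (H w1 E1') as K | pose proof (H w2 E2') as K
            | pose proof (H w3 E3') as K ];
      rewrite Vr in K; auto; discriminate.
    + intros Hs w Hw.
      destruct (s w1) eqn:E1', (s w2) eqn:E2', (s w3) eqn:E3'; simpl in Hs; try discriminate;
      destruct w; congruence.
  - exists cT. intro s. simpl. split; [reflexivity|].
    intros _ w _. apply Vr; auto.
  - exists cBot. intro s. simpl. split.
    + intro H. rewrite !H. reflexivity.
    + intros Hs w.
      destruct (s w1) eqn:E1', (s w2) eqn:E2', (s w3) eqn:E3'; simpl in Hs; try discriminate;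
      destruct w; congruence.
  - exists cT. intro s. simpl. split; [reflexivity|].
    intros _ w v _ _ _. rewrite !Vr; auto.
  - destruct IHphi1 as [c Hc]; try tauto.
    destruct IHphi2 as [d Hd]; try tauto.
    exists (andc c d). apply and_ok; auto.
  - destruct IHphi1 as [c Hc]; try tauto.
    destruct IHphi2 as [d Hd]; try tauto.
    exists (tensc c d). apply tens_ok; auto.
Qed.

End M.

Theorem lemma5 (p q a b : letter) (phi : form) :
  p <> q -> a <> b ->
  is_context a b phi ->
  ~ occurs p phi -> ~ occurs q phi ->
  let psi := subst2 a b (dep0 p) (dep0 q) phi in
  let V := V_pq p q in
  equiv_in V psi Top \/
  equiv_in V psi (Tensor (And (dep0 p) (dep0 q)) (And (dep0 p) (dep0 q))) \/
  equiv_in V psi (dep0 p) \/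
  equiv_in V psi (dep0 q) \/
  equiv_in V psi (And (dep0 p) (dep0 q)) \/
  equiv_in V psi Bot.
Proof.
  intros Hpq Hab [Ha Hb] Hp Hq psi V.
  destruct (main p q Hpq a b phi Hab Ha Hb Hp Hq) as [c Hc].
  pose proof (dep_p p q Hpq) as DP. pose proof (dep_q p q Hpq) as DQ.
  pose proof (and_ok p q _ _ _ _ DP DQ) as AB.
  pose proof (tens_ok p q _ _ _ _ AB AB) as TT.
  assert (BT : hascls p q Bot cBot).
  { intro s. simpl. split.
    + intro H. rewrite !H. reflexivity.
    + intros Hs w.
      destruct (s w1) eqn:E1', (s w2) eqn:E2', (s w3) eqn:E3'; simpl in Hs; try discriminate;
      destruct w; congruence. }
  unfold equiv_in, psi, V; unfold hascls in *.
  destruct c.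
  - do 5 right. intro s. rewrite Hc, BT. reflexivity.
  - do 4 right; left. intro s. rewrite Hc, AB. reflexivity.
  - do 2 right; left. intro s. rewrite Hc, DP. reflexivity.
  - do 3 right; left. intro s. rewrite Hc, DQ. reflexivity.
  - right; left. intro s. rewrite Hc, TT. reflexivity.
  - left. intro s. split; intros _; [apply top_all | apply Hc; reflexivity].
Qed.
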